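(* Let $\phi: M_n\to M_n$ be a unital PPT map with $\phi\circ\phi=\phi$. Then $\phi$ is entanglement breaking.
   Context: $M_n$ denotes the $n\times n$ complex matrices. A linear map is completely positive (CP) if $\phi\otimes \mathrm{id}_k$ is positive for all $k$. A CP map $\phi: M_n\to M_n$ is PPT if $T\circ\phi$ is CP, where $T$ is the transpose map on $M_n$. A map $\phi: M_p\to M_q$ is entanglement breaking if it can be written as $\phi(X)=\sum_k v_k w_k^* X w_k v_k^*$ for finitely many vectors $w_k\in\mathbb{C}^p$, $v_k\in\mathbb{C}^q$. *)

(* Defs.v *)
From HB Require Import structures.
From mathcomp Require Import all_boot all_order all_algebra.
From mathcomp Require Import complex.
From mathcomp Require Import reals.
Set Implicit Arguments. Unset Strict Implicit. Unset Printing Implicit Defensive.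
Import Order.TTheory GRing.Theory Num.Theory.
Local Open Scope ring_scope.

Definition adjmx {C : numClosedFieldType} {m n : nat} (A : 'M[C]_(m, n)) : 'M[C]_(n, m) :=
  (map_mx Num.conj A)^T.

Definition psdmx {C : numClosedFieldType} {m : nat} (A : 'M[C]_m) : Prop :=
  adjmx A = A /\ forall x : 'cV[C]_m, 0 <= (adjmx x *m A *m x) 0 0.

Definition blockmx {C : numClosedFieldType} {n k : nat} (X : 'I_k -> 'I_k -> 'M[C]_n) :=
  @mxblock C k k (fun _ => n) (fun _ => n) X.

Definition positive_map {C : numClosedFieldType} {n m : nat} (phi : 'M[C]_n -> 'M[C]_m) : Prop :=
  forall A : 'M[C]_n, psdmx A -> psdmx (phi A).

(* id_k (x) phi positive for every k *)
Definition completely_positive {C : numClosedFieldType} {n m : nat}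
  (phi : 'M[C]_n -> 'M[C]_m) : Prop :=
  forall (k : nat) (X : 'I_k -> 'I_k -> 'M[C]_n),
    psdmx (blockmx X) -> psdmx (blockmx (fun i j => phi (X i j))).

Definition PPT {C : numClosedFieldType} {n : nat} (phi : 'M[C]_n -> 'M[C]_n) : Prop :=
  completely_positive phi /\ completely_positive (fun X => (phi X)^T).

Definition entanglement_breaking {C : numClosedFieldType} {p q : nat}
  (phi : 'M[C]_p -> 'M[C]_q) : Prop :=
  exists s : seq ('cV[C]_q * 'cV[C]_p),
    forall X : 'M[C]_p,
      phi X = \sum_(t <- s) (t.1 *m adjmx t.2 *m X *m t.2 *m adjmx t.1).

(* Main.v *)
Require Import Defs.
From HB Require Import structures.
From mathcomp Require Import all_boot all_order all_algebra.
From mathcomp Require Import complex.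
From mathcomp Require Import reals.
From mathcomp Require Import ring zify.
From Stdlib Require Import Classical.
Set Implicit Arguments. Unset Strict Implicit. Unset Printing Implicit Defensive.
Import Order.TTheory GRing.Theory Num.Theory.
Local Open Scope ring_scope.
Section Basics.
Variable C : numClosedFieldType.

Lemma adjmxK m n (A : 'M[C]_(m,n)) : adjmx (adjmx A) = A.
Proof. by apply/matrixP=> i j; rewrite !mxE conjCK. Qed.

Lemma adjmxM m n p (A : 'M[C]_(m,n)) (B : 'M_(n,p)) :
  adjmx (A *m B) = adjmx B *m adjmx A.
Proof.
apply/matrixP => i j; rewrite !mxE rmorph_sum; apply: eq_bigr => k _.
by rewrite !mxE rmorphM mulrC.
Qed.

Lemma adjmxD m n (A B : 'M[C]_(m,n)) : adjmx (A + B) = adjmx A + adjmx B.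
Proof. by apply/matrixP=> i j; rewrite !mxE rmorphD. Qed.

Lemma adjmxN m n (A : 'M[C]_(m,n)) : adjmx (- A) = - adjmx A.
Proof. by apply/matrixP=> i j; rewrite !mxE rmorphN. Qed.

Lemma adjmxB m n (A B : 'M[C]_(m,n)) : adjmx (A - B) = adjmx A - adjmx B.
Proof. by rewrite adjmxD adjmxN. Qed.

Lemma adjmxZ m n (c : C) (A : 'M[C]_(m,n)) : adjmx (c *: A) = c^* *: adjmx A.
Proof. by apply/matrixP=> i j; rewrite !mxE rmorphM. Qed.

Lemma adjmx0 m n : adjmx (0 : 'M[C]_(m,n)) = 0.
Proof. by apply/matrixP=> i j; rewrite !mxE rmorph0. Qed.

Lemma adjmx1 n : adjmx (1%:M : 'M[C]_n) = 1%:M.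
Proof. by apply/matrixP=> i j; rewrite !mxE eq_sym rmorph_nat. Qed.

Lemma adjmx_sum m n (I : Type) (r : seq I) (F : I -> 'M[C]_(m,n)) :
  adjmx (\sum_(i <- r) F i) = \sum_(i <- r) adjmx (F i).
Proof.
elim: r => [|a r IH]; first by rewrite !big_nil adjmx0.
by rewrite !big_cons adjmxD IH.
Qed.

Lemma adjmx_tr m n (A : 'M[C]_(m,n)) : adjmx (A^T) = (adjmx A)^T.
Proof. by apply/matrixP=> i j; rewrite !mxE. Qed.

Lemma adjmx00 (M : 'M[C]_1) : (adjmx M) 0 0 = (M 0 0)^*.
Proof. by rewrite !mxE. Qed.

Definition bf n (K : 'M[C]_n) (x y : 'cV[C]_n) := (adjmx x *m K *m y) 0 0.

Lemma bfDl n (K : 'M[C]_n) x y z : bf K (x + y) z = bf K x z + bf K y z.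
Proof. by rewrite /bf adjmxD !mulmxDl mxE. Qed.
Lemma bfDr n (K : 'M[C]_n) x y z : bf K x (y + z) = bf K x y + bf K x z.
Proof. by rewrite /bf mulmxDr mxE. Qed.
Lemma bfZl n (K : 'M[C]_n) c x y : bf K (c *: x) y = c^* * bf K x y.
Proof. by rewrite /bf adjmxZ -!scalemxAl mxE. Qed.
Lemma bfZr n (K : 'M[C]_n) c x y : bf K x (c *: y) = c * bf K x y.
Proof. by rewrite /bf -!scalemxAr mxE. Qed.
Lemma bfDm n (K L : 'M[C]_n) x y : bf (K + L) x y = bf K x y + bf L x y.
Proof. by rewrite /bf mulmxDr mulmxDl mxE. Qed.
Lemma bfNm n (K : 'M[C]_n) x y : bf (- K) x y = - bf K x y.
Proof. by rewrite /bf mulmxN mulNmx mxE. Qed.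
Lemma bfBm n (K L : 'M[C]_n) x y : bf (K - L) x y = bf K x y - bf L x y.
Proof. by rewrite bfDm bfNm. Qed.
Lemma bfZm n (K : 'M[C]_n) c x y : bf (c *: K) x y = c * bf K x y.
Proof. by rewrite /bf -scalemxAr -scalemxAl mxE. Qed.
Lemma bf_adj n (K : 'M[C]_n) x y : bf (adjmx K) x y = (bf K y x)^*.
Proof. by rewrite /bf -adjmx00 !adjmxM adjmxK mulmxA. Qed.

Lemma bf_delta n (K : 'M[C]_n) i j : bf K (delta_mx i 0) (delta_mx j 0) = K i j.
Proof.
rewrite /bf.
have -> : adjmx (delta_mx i 0 : 'cV[C]_n) = delta_mx 0 i.
  by apply/matrixP=> a b; rewrite !mxE rmorph_nat andbC.
by rewrite -rowE -colE !mxE.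
Qed.

Lemma quad_zero n (K : 'M[C]_n) : (forall x, bf K x x = 0) -> K = 0.
Proof.
move=> H; apply/matrixP => i j; rewrite mxE -bf_delta.
set u := delta_mx i 0; set v := delta_mx j 0.
have E c : bf K (u + c *: v) (u + c *: v) = c * bf K u v + c^* * bf K v u.
  rewrite !(bfDl, bfDr, bfZl, bfZr) !H; ring.
have E1 := E 1; have Ei := E 'i.
rewrite H rmorph1 !mul1r in E1; rewrite H conjCi in Ei.
have h1 : bf K v u = - bf K u v by apply/eqP; rewrite -subr_eq0 opprK addrC -E1.
rewrite h1 in Ei.
have : 'i * 2%:R * bf K u v = 0 by rewrite Ei; ring.
by move/eqP; rewrite !mulf_eq0 (negbTE (neq0Ci C)) pnatr_eq0 /= => /eqP.
Qed.


Lemma gram00 m (y : 'cV[C]_m) : (adjmx y *m y) 0 0 = \sum_i (y i 0)^* * y i 0.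
Proof. by rewrite mxE; apply: eq_bigr => i _; rewrite !mxE. Qed.

Lemma gram00_ge0 m (y : 'cV[C]_m) : 0 <= (adjmx y *m y) 0 0.
Proof. by rewrite gram00; apply: sumr_ge0 => i _; rewrite mulrC mul_conjC_ge0. Qed.

Lemma psdP n (A : 'M[C]_n) : psdmx A <-> forall x, 0 <= bf A x x.
Proof.
split; first by case.
move=> H; split => // ; apply/eqP; rewrite -subr_eq0; apply/eqP/quad_zero => x.
by rewrite bfBm bf_adj geC0_conj // subrr.
Qed.

Lemma psd_add n (A B : 'M[C]_n) : psdmx A -> psdmx B -> psdmx (A + B).
Proof.
move=> /psdP hA /psdP hB; apply/psdP => x; rewrite bfDm; exact: addr_ge0.
Qed.

Lemma psd_scale n (A : 'M[C]_n) c : 0 <= c -> psdmx A -> psdmx (c *: A).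
Proof. by move=> hc /psdP hA; apply/psdP => x; rewrite bfZm mulr_ge0. Qed.

Lemma psd0 n : psdmx (0 : 'M[C]_n).
Proof. by apply/psdP => x; rewrite /bf mulmx0 mul0mx mxE. Qed.

Lemma psd_sum n (I : Type) (r : seq I) (F : I -> 'M[C]_n) :
  (forall i, psdmx (F i)) -> psdmx (\sum_(i <- r) F i).
Proof.
move=> H; elim: r => [|a r IH]; first by rewrite big_nil; exact: psd0.
by rewrite big_cons; apply: psd_add.
Qed.

Lemma psd_gram m n (S : 'M[C]_(m, n)) : psdmx (adjmx S *m S).
Proof.
apply/psdP => x; rewrite /bf mulmxA -adjmxM -mulmxA; exact: gram00_ge0.
Qed.

Lemma psd_congr m n (A : 'M[C]_m) (S : 'M[C]_(m, n)) :
  psdmx A -> psdmx (adjmx S *m A *m S).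
Proof.
move=> /psdP hA; apply/psdP => x.
have -> : bf (adjmx S *m A *m S) x x = bf A (S *m x) (S *m x).
  by rewrite /bf adjmxM !mulmxA.
exact: hA.
Qed.

Lemma psd_tr n (A : 'M[C]_n) : psdmx (A^T) -> psdmx A.
Proof.
move=> /psdP hA; apply/psdP => x.
have := hA (map_mx Num.conj x).
suff -> : bf A^T (map_mx Num.conj x) (map_mx Num.conj x) = bf A x x by [].
rewrite /bf.
have -> : adjmx (map_mx Num.conj x) = x^T.
  by apply/matrixP => i j; rewrite !mxE conjCK.
have -> : adjmx x *m A *m x = (x^T *m A^T *m map_mx Num.conj x)^T.
  by rewrite !trmx_mul !trmxK mulmxA.
by rewrite [RHS]mxE.
Qed.

Lemma psd_antisym n (A B : 'M[C]_n) : psdmx (A - B) -> psdmx (B - A) -> A = B.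
Proof.
move=> /psdP h1 /psdP h2; apply/eqP; rewrite -subr_eq0; apply/eqP/quad_zero => x.
apply/eqP; rewrite eq_le h1 andbT.
by have := h2 x; rewrite -(opprB A B) bfNm oppr_ge0.
Qed.

Lemma gram_zero m n (S : 'M[C]_(m, n)) : adjmx S *m S = 0 -> S = 0.
Proof.
move=> H; apply/matrixP => i j; rewrite mxE.
have := congr1 (fun M : 'M[C]_n => M j j) H; rewrite !mxE.
have -> : \sum_k adjmx S j k * S k j = \sum_k (S k j)^* * S k j.
  by apply: eq_bigr => k _; rewrite !mxE.
move/eqP; rewrite psumr_eq0; last by move=> k _; rewrite mulrC mul_conjC_ge0.
move/allP/(_ i (mem_index_enum _)); rewrite mulrC mul_conjC_eq0 => /implyP.
by move/(_ isT)/eqP.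
Qed.

Lemma psd_scale_ge0 n (A : 'M[C]_n) c : psdmx A -> A != 0 -> psdmx (c *: A) -> 0 <= c.
Proof.
move=> /psdP hA nz /psdP hcA.
have [x hx] : exists x, bf A x x != 0.
  apply: NNPP => H; move/eqP: nz; apply; apply: quad_zero => x.
  by apply/eqP/negPn/negP => hx; apply: H; exists x.
have := hcA x; rewrite bfZm pmulr_lge0 //.
by rewrite lt_def hx hA.
Qed.


Lemma tstarE m n (M : 'M[C]_(m,n)) : map_mx Num.conj (M^T) = adjmx M.
Proof. by apply/matrixP => i j; rewrite !mxE. Qed.

Lemma mx_row_col m n p (M : 'M[C]_(m,n)) (Q : 'M[C]_(n,p)) i j :
  (M *m Q) i j = (row i M *m col j Q) 0 0.
Proof. by rewrite !mxE; apply: eq_bigr => k _; rewrite !mxE. Qed.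

Lemma adjmx_diag n (e : 'rV[C]_n) : adjmx (diag_mx e) = diag_mx (map_mx Num.conj e).
Proof.
apply/matrixP => i j; rewrite !mxE.
case: (eqVneq i j) => [->|h]; first by rewrite ?eqxx !mulr1n.
by rewrite ?(negPf h) ?eq_sym ?(negPf h) !mulr0n rmorph0.
Qed.

Definition msqrt n (A : 'M[C]_n) := diag_mx (\row_i sqrtC (spectral_diag A 0 i)) *m spectralmx A.

Lemma msqrtE n (A : 'M[C]_n) : psdmx A -> A = adjmx (msqrt A) *m msqrt A.
Proof.
move=> hpsd; have [hA hq] := hpsd.
have nA : A \is normalmx by apply/normalmxP; rewrite tstarE hA.
have := spectral_unitarymx A; set P := spectralmx A => Pu.
move/orthomx_spectralP: nA; set d := spectral_diag A => Ae.
have iP : invmx P = adjmx P by rewrite invmx_unitary // tstarE.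
have PP : P *m adjmx P = 1%:M by rewrite -tstarE; apply/unitarymxP.
have dge0 i : 0 <= d 0 i.
  have -> : d 0 i = (P *m A *m adjmx P) i i.
    rewrite Ae iP !mulmxA PP mul1mx -mulmxA PP mulmx1 mxE eqxx mulr1n //.
  rewrite mx_row_col.
  have -> : col i (adjmx P) = adjmx (row i P) by apply/matrixP => a b; rewrite !mxE.
  have -> : row i (P *m A) = adjmx (adjmx (row i P)) *m A by rewrite adjmxK row_mul.
  exact: hq.
rewrite /msqrt -/P -/d.
rewrite adjmxM adjmx_diag -mulmxA [diag_mx _ *m (_ *m _)]mulmxA mulmx_diag.
have -> : \row_j ((map_mx Num.conj (\row_i sqrtC (d 0 i))) 0 j * (\row_i sqrtC (d 0 i)) 0 j) = d.
  apply/rowP => j; rewrite !mxE geC0_conj ?sqrtC_ge0 // -expr2 sqrtCK //.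
by rewrite Ae iP mulmxA.
Qed.

Lemma psd_factor n (A : 'M[C]_n) : psdmx A -> exists S : 'M[C]_n, A = adjmx S *m S.
Proof. by move=> h; exists (msqrt A); exact: msqrtE. Qed.

Definition rk1 n (A : 'M[C]_n) : seq 'cV[C]_n :=
  [seq adjmx (row t (msqrt A)) | t <- enum 'I_n].

Lemma gram_sum m n (S : 'M[C]_(m, n)) :
  adjmx S *m S = \sum_(t < m) adjmx (row t S) *m row t S.
Proof.
apply/matrixP => i j; rewrite summxE !mxE; apply: eq_bigr => t _.
by rewrite !mxE big_ord1 !mxE.
Qed.

Lemma rk1E n (A : 'M[C]_n) : psdmx A -> A = \sum_(v <- rk1 A) v *m adjmx v.
Proof.
move=> h; rewrite {1}(msqrtE h) gram_sum /rk1 big_map big_enum /=.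
by apply: eq_bigr => t _; rewrite adjmxK.
Qed.

Definition funmx n (f : 'M[C]_n -> C) : 'M[C]_n := \matrix_(k, j) f (delta_mx j k).

Lemma func_rep n (f : 'M[C]_n -> C) :
  (forall a X Y, f (a *: X + Y) = a * f X + f Y) ->
  (forall X, psdmx X -> 0 <= f X) ->
  forall X, f X = \sum_(w <- rk1 (funmx f)) (adjmx w *m X *m w) 0 0.
Proof.
move=> hl hp.
have f0 : f 0 = 0.
  have := hl 1 0 0; rewrite scaler0 addr0 mul1r => h.
  by apply: (addIr (f 0)); rewrite add0r -h.
have fD X Y : f (X + Y) = f X + f Y by have := hl 1 X Y; rewrite scale1r mul1r.
have fZ a Y : f (a *: Y) = a * f Y by rewrite -[a *: Y]addr0 hl f0 addr0.
have fS (I : Type) (r : seq I) (Z : I -> 'M[C]_n) :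
    f (\sum_(i <- r) Z i) = \sum_(i <- r) f (Z i).
  elim: r => [|a r IH]; first by rewrite !big_nil f0.
  by rewrite !big_cons fD IH.
have fS2 (c : 'I_n -> 'I_n -> C) (Y : 'I_n -> 'I_n -> 'M[C]_n) :
    f (\sum_i \sum_j c i j *: Y i j) = \sum_i \sum_j c i j * f (Y i j).
  rewrite fS; apply: eq_bigr => i _; rewrite fS; apply: eq_bigr => j _; exact: fZ.
have Mpsd : psdmx (funmx f).
  apply/psdP => w.
  have -> : bf (funmx f) w w = f (w *m adjmx w).
    rewrite (matrix_sum_delta (w *m adjmx w)) fS2.
    rewrite /bf mxE; apply: eq_bigr => k _; rewrite !mxE mulr_suml.
    apply: eq_bigr => j _; rewrite !mxE big_ord1 !mxE.
    ring.
  by apply: hp; rewrite -{1}(adjmxK w); exact: psd_gram.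
move=> X; have Me := msqrtE Mpsd; set S := msqrt (funmx f) in Me.
rewrite /rk1 -/S big_map big_enum /=; clearbody S.
rewrite {1}(matrix_sum_delta X) fS2.
have -> : \sum_(t < n) (adjmx (adjmx (row t S)) *m X *m adjmx (row t S)) 0 0
   = \sum_(t < n) \sum_(k < n) \sum_(j < n) X j k * ((S t k)^* * S t j).
  apply: eq_bigr => t _; rewrite adjmxK mxE; apply: eq_bigr => k _.
  rewrite !mxE mulr_suml; apply: eq_bigr => j _; rewrite !mxE.
  ring.
rewrite [RHS]exchange_big /= [in LHS]exchange_big /=; apply: eq_bigr => k _.
rewrite [RHS]exchange_big /=; apply: eq_bigr => j _.
rewrite -mulr_sumr; congr (_ * _).
have := congr1 (fun M : 'M[C]_n => M k j) Me; rewrite !mxE => ->.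
by apply: eq_bigr => t _; rewrite !mxE.
Qed.



Lemma adjmx_mxrow k m n (Z : 'I_k -> 'M[C]_(m, n)) :
  adjmx (\mxrow_j Z j) = \mxcol_j adjmx (Z j).
Proof. by apply/matrixP => i j; rewrite !mxE. Qed.

Lemma adjmx_mxcol k m n (Z : 'I_k -> 'M[C]_(n, m)) :
  adjmx (\mxcol_j Z j) = \mxrow_j adjmx (Z j).
Proof. by apply/matrixP => i j; rewrite !mxE. Qed.

Lemma adjmx_blk k n (Y : 'I_k -> 'I_k -> 'M[C]_n) :
  adjmx (blockmx Y) = blockmx (fun i j => adjmx (Y j i)).
Proof. by apply/matrixP => i j; rewrite !mxE. Qed.

Lemma blk_gram k n (Z : 'I_k -> 'M[C]_n) :
  blockmx (fun i j => adjmx (Z i) *m Z j) = adjmx (\mxrow_j Z j) *m \mxrow_j Z j.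
Proof. by rewrite adjmx_mxrow mul_mxcol_mxrow. Qed.

Lemma blk_gram_psd k n (Z : 'I_k -> 'M[C]_n) :
  psdmx (blockmx (fun i j => adjmx (Z i) *m Z j)).
Proof. rewrite blk_gram; exact: psd_gram. Qed.

Lemma blk_herm k n (Y : 'I_k -> 'I_k -> 'M[C]_n) :
  psdmx (blockmx Y) -> forall i j, Y j i = adjmx (Y i j).
Proof.
case=> h _ i j.
have := congr1 (fun M => @submxblock _ _ _ (fun _ => n) (fun _ => n) M j i) h.
by rewrite adjmx_blk /blockmx !mxblockK.
Qed.

Lemma blk_quad k n (Y : 'I_k -> 'I_k -> 'M[C]_n) :
  psdmx (blockmx Y) -> forall v : 'I_k -> 'cV[C]_n,
  0 <= (\sum_j \sum_i (adjmx (v i) *m Y i j *m v j)) 0 0.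
Proof.
case=> _ hq v; have := hq (\mxcol_j v j).
rewrite adjmx_mxcol /blockmx mul_mxrow_mxblock mul_mxrow_mxcol.
by under eq_bigr do rewrite mulmx_suml.
Qed.

End Basics.
Section Schwarz.
Variable C : numClosedFieldType.
Variable n : nat.

Lemma schwarz (psi : 'M[C]_n -> 'M[C]_n) :
  psi 1%:M = 1%:M -> completely_positive psi -> forall X,
  psi (adjmx X) = adjmx (psi X) /\
  psdmx (psi (adjmx X *m X) - adjmx (psi X) *m psi X).
Proof.
move=> h1 hcp X.
pose Z : 'I_2 -> 'M[C]_n := fun i => if val i == 0%N then 1%:M else X.
have hB := hcp 2 (fun i j => adjmx (Z i) *m Z j) (blk_gram_psd Z).
have herm : psi (adjmx X) = adjmx (psi X).
  have := blk_herm hB ord0 (lift ord0 ord0).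
  by rewrite /Z /= adjmx1 mulmx1 mul1mx.
split => //; apply/psdP => w.
pose v : 'I_2 -> 'cV[C]_n := fun i => if val i == 0%N then - (psi X *m w) else w.
have := blk_quad hB v.
rewrite !big_ord_recl !big_ord0 !addr0 /v /Z /= adjmx1 !mulmx1 !mul1mx h1 herm.
rewrite /bf adjmxN adjmxM !mulNmx !mulmxN !opprK !mulmx1 !mulmxA.
rewrite mulmxBr mulmxBl !mulmxA.
set T := adjmx w *m adjmx (psi X) *m psi X *m w.
set U := adjmx w *m psi (adjmx X *m X) *m w.
by rewrite subrr add0r addrC.
Qed.

End Schwarz.
Section Diag.
Variable F : closedFieldType.
Variable N : nat.

Lemma diag_reduced (A : 'M[F]_N.+1) (S : 'M[F]_N.+1 -> Prop) :
  S A -> S 0 -> (forall M M', S M -> S M' -> S (M + M')) ->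
  (forall c M, S M -> S (c *: M)) -> (forall M, S M -> S (M *m A)) ->
  (forall M k, S M -> M ^+ k = 0 -> M = 0) -> diagonalizable A.
Proof.
move=> SA S0 SD SZ SM Sred.
have [s hs] := closed_field_poly_normal (char_poly A).
rewrite (monicP (char_poly_monic A)) scale1r in hs.
set rs := [seq r <- undup s | r != 0].
apply/diagonalizableP; exists (0 :: rs).
  by rewrite /= mem_filter eqxx /= filter_uniq // undup_uniq.
rewrite big_cons subr0; set q := \prod_(r <- rs) ('X - r%:P).
apply/mxminpoly_minP; rewrite rmorphM /= horner_mx_X.
have Sp p : S (A * horner_mx A p).
  elim/poly_ind: p => [|p c IH]; first by rewrite rmorph0 mulr0.
  rewrite rmorphD rmorphM /= horner_mx_X horner_mx_C mulrDr mulrA.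
  rewrite -scalemx1 -mulmxE -scalemxAr mulmx1.
  by apply: SD; [apply: SM | apply: SZ].
apply: (Sred _ (size s) (Sp q)).
have fac z : z \in s -> ('X - z%:P) %| 'X * q.
  move=> zs; have [->|z0] := eqVneq z 0; first by rewrite subr0 dvdp_mulIl.
  have zr : z \in rs by rewrite mem_filter z0 mem_undup.
  by rewrite /q (big_rem z zr) /= dvdp_mull // dvdp_mulIl.
have : char_poly A %| ('X * q) ^+ size s.
  rewrite hs; have : all (fun z => ('X - z%:P) %| 'X * q) s by apply/allP.
  elim: (s) => [|a s' IH]; first by rewrite big_nil expr0 dvdpp.
  by rewrite big_cons /= exprS => /andP [h1 h2]; apply: dvdp_mul => //; apply: IH.
move/(dvdp_trans (mxminpoly_dvd_char A))/mxminpoly_minP.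
by rewrite rmorphXn rmorphM /= horner_mx_X.
Qed.
End Diag.
Section Phi.
Variable C : numClosedFieldType.
Variable n' : nat.
Local Notation n := n'.+1.
Variable phi : {linear 'M[C]_n -> 'M[C]_n}.
Hypothesis phi1 : phi 1%:M = 1%:M.
Hypothesis phicp : completely_positive phi.
Hypothesis phicpt : completely_positive (fun X => (phi X)^T).
Hypothesis phiid : forall X, phi (phi X) = phi X.

Lemma phiD A B : phi (A + B) = phi A + phi B. Proof. exact: linearD. Qed.
Lemma phiB A B : phi (A - B) = phi A - phi B. Proof. exact: linearB. Qed.
Lemma phiN A : phi (- A) = - phi A. Proof. exact: linearN. Qed.
Lemma phiZ c A : phi (c *: A) = c *: phi A. Proof. exact: linearZ. Qed.
Lemma phi0 : phi 0 = 0. Proof. exact: linear0. Qed.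
Lemma phi_sum (I : Type) (r : seq I) (F : I -> 'M[C]_n) :
  phi (\sum_(i <- r) F i) = \sum_(i <- r) phi (F i).
Proof. exact: linear_sum. Qed.

Lemma herm X : phi (adjmx X) = adjmx (phi X).
Proof. exact: (schwarz phi1 phicp X).1. Qed.

Lemma sch1 X : psdmx (phi (adjmx X *m X) - adjmx (phi X) *m phi X).
Proof. exact: (schwarz phi1 phicp X).2. Qed.

Lemma sch2 X : psdmx (phi (adjmx X *m X) - phi X *m adjmx (phi X)).
Proof.
have h1 : (fun X => (phi X)^T) 1%:M = 1%:M by rewrite /= phi1 trmx1.
have := (schwarz h1 phicpt X).2 => /=.
rewrite adjmx_tr -trmx_mul -linearB /=; exact: psd_tr.
Qed.

Lemma pos A : psdmx A -> psdmx (phi A).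
Proof.
move=> /psd_factor [S ->].
have := psd_add (sch1 S) (psd_gram (phi S)).
by rewrite subrK.
Qed.

Lemma adjE x : phi x = x -> phi (adjmx x) = adjmx x.
Proof. by move=> h; rewrite herm h. Qed.

Lemma faithful x : phi x = x -> phi (adjmx x *m x) = 0 -> x = 0.
Proof.
move=> hx h0; apply: gram_zero; apply: psd_antisym.
  by rewrite subr0; exact: psd_gram.
by have := sch1 x; rewrite h0 hx sub0r.
Qed.

Lemma lin_psd_zero (K L : 'M[C]_n) : psdmx L ->
  (forall t : C, psdmx (t *: K + t^* *: adjmx K + (t^* * t) *: L)) -> K = 0.
Proof.
move=> hL H; apply: quad_zero => w.
set a := bf K w w; set g := bf L w w.
have g0 : 0 <= g by have := (psdP L).1 hL w.
pose s := (1 + g)^-1.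
have s0 : 0 < s by rewrite invr_gt0 ltr_wpDr.
have sc : s^* = s by rewrite geC0_conj // ltW.
have sg1 : s * g <= 1.
  by rewrite mulrC ler_pdivrMr ?mul1r ?lerDr ?ltr_wpDr.
pose N := a * a^*.
have N0 : 0 <= N by exact: mul_conjC_ge0.
have := (psdP _).1 (H (- (s * a^*))) w.
have ct : (- (s * a^*))^* = - (s * a).
  by rewrite rmorphN rmorphM /= conjCK sc.
rewrite !bfDm !bfZm bf_adj -/a -/g ct.
have -> : - (s * a^*) * a + - (s * a) * a^* + - (s * a) * - (s * a^*) * g
   = s * N * (s * g - 2%:R) by rewrite /N; ring.
have neg : s * g - 2%:R < 0.
  rewrite subr_lt0; apply: (le_lt_trans sg1).
  by rewrite (_ : 2%:R = 1 + 1) // ltrDl ltr01.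
rewrite nmulr_lge0 // => sN.
have sN0 : s * N = 0 by apply/eqP; rewrite eq_le sN mulr_ge0 // ltW.
move/eqP: sN0; rewrite mulf_eq0 (gt_eqF s0) /= /N mul_conjC_eq0 => /eqP.
by rewrite /a.
Qed.


Lemma bimod0 a c : phi a = a -> phi c = 0 -> phi (a *m c) = 0.
Proof.
move=> ha hc.
apply: (@lin_psd_zero _ (phi (adjmx c *m c))); first exact/pos/psd_gram.
move=> t; set Z := adjmx a + t *: c.
have hZ : phi Z = adjmx a by rewrite /Z phiD phiZ adjE // hc scaler0 addr0.
have := pos (sch1 Z); rewrite hZ adjmxK phiB.
have -> : adjmx Z *m Z = a *m adjmx a + (t *: (a *m c) + t^* *: adjmx (a *m c)
     + (t^* * t) *: (adjmx c *m c)).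
  rewrite /Z adjmxD adjmxZ adjmxK !mulmxDl !mulmxDr adjmxM.
  rewrite -!scalemxAl -!scalemxAr scalerA !addrA.
  congr (_ + _); rewrite -!addrA; congr (_ + _); exact: addrC.
by rewrite !phiD !phiZ !phiid herm addrAC subrr add0r.
Qed.

Lemma bimod_l a b : phi a = a -> phi (a *m b) = phi (a *m phi b).
Proof.
move=> ha; have := bimod0 (c := b - phi b) ha.
rewrite phiB phiid subrr => /(_ erefl).
by rewrite mulmxBr phiB => /eqP; rewrite subr_eq0 => /eqP.
Qed.

Lemma bimod_r a b : phi a = a -> phi (b *m a) = phi (phi b *m a).
Proof.
move=> ha; apply: (can_inj (@adjmxK _ _ _)).
by rewrite -!herm !adjmxM (bimod_l _ (adjE ha)) herm.
Qed.

Lemma sq_comm x : phi x = x -> phi (adjmx x *m x) = phi (x *m adjmx x).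
Proof.
move=> hx; apply: psd_antisym.
  by have := pos (sch2 x); rewrite phiB phiid hx.
by have := pos (sch2 (adjmx x)); rewrite phiB phiid adjE // adjmxK.
Qed.

Definition Dform (p q : 'M[C]_n) := phi (adjmx p *m q) - phi (q *m adjmx p).

Lemma DformDl p p' q c : Dform (p + c *: p') q = Dform p q + c^* *: Dform p' q.
Proof.
rewrite /Dform adjmxD adjmxZ mulmxDl mulmxDr -scalemxAl -scalemxAr.
rewrite !phiD !phiZ scalerBr; set u := phi _; set v := phi _.
set w := phi _; set z := phi _.
by rewrite opprD addrACA.
Qed.

Lemma DformDr p q q' c : Dform p (q + c *: q') = Dform p q + c *: Dform p q'.
Proof.
rewrite /Dform mulmxDl mulmxDr -scalemxAl -scalemxAr.
rewrite !phiD !phiZ scalerBr.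
by rewrite opprD addrACA.
Qed.

Lemma comm x y : phi x = x -> phi y = y -> phi (x *m y) = phi (y *m x).
Proof.
move=> hx hy; set u := adjmx x.
have hu : phi u = u by exact: adjE.
have Z z : phi z = z -> Dform z z = 0.
  by move=> hz; rewrite /Dform sq_comm // subrr.
have E c : Dform (u + c *: y) (u + c *: y) = c *: Dform u y + c^* *: Dform y u.
  by rewrite DformDl !DformDr !Z // add0r scaler0 addr0.
have inE c : phi (u + c *: y) = u + c *: y by rewrite phiD phiZ hu hy.
have E1 := E 1; have Ei := E 'i.
rewrite Z // rmorph1 !scale1r in E1; rewrite Z // conjCi in Ei.
have h1 : Dform y u = - Dform u y by apply/eqP; rewrite -subr_eq0 opprK addrC -E1.
rewrite h1 scaleNr scalerN opprK in Ei.
have : ('i * 2%:R) *: Dform u y = 0 by rewrite Ei -scalerA scaler_nat mulr2n scalerDr.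
move/eqP; rewrite scaler_eq0 mulf_eq0 (negbTE (neq0Ci C)) pnatr_eq0 /=.
by rewrite /Dform /u adjmxK subr_eq0 => /eqP.
Qed.


Definition Amx (x : 'M[C]_n) : 'M[C]_(n * n) := lin_mx (phi \o mulmx x \o phi).

Lemma AmxE x Y : mxvec Y *m Amx x = mxvec (phi (x *m phi Y)).
Proof. by rewrite mul_vec_lin. Qed.

Lemma mx_vec_ext (M M' : 'M[C]_(n * n)) :
  (forall Y, mxvec Y *m M = mxvec Y *m M') -> M = M'.
Proof.
move=> H; apply/row_matrixP => i; rewrite !rowE.
by have := H (vec_mx (delta_mx 0 i)); rewrite vec_mxK.
Qed.

Lemma AmxM x z : phi x = x -> phi z = z -> Amx x *m Amx z = Amx (phi (z *m x)).
Proof.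
move=> hx hz; apply: mx_vec_ext => Y; rewrite mulmxA !AmxE phiid.
rewrite -bimod_l // mulmxA -bimod_r //; exact: phiid.
Qed.

Lemma AmxC x z : phi x = x -> phi z = z -> Amx x *m Amx z = Amx z *m Amx x.
Proof. by move=> hx hz; rewrite !AmxM // comm. Qed.

Lemma Amx_lin c x y : Amx (c *: x + y) = c *: Amx x + Amx y.
Proof.
apply: mx_vec_ext => Y; rewrite mulmxDr -scalemxAr !AmxE mulmxDl -scalemxAl.
by rewrite phiD phiZ linearD linearZ.
Qed.

Lemma Amx0 : Amx 0 = 0.
Proof. by apply: mx_vec_ext => Y; rewrite AmxE mul0mx phi0 mulmx0 linear0. Qed.

Lemma Amx1 Y : mxvec Y *m Amx 1%:M = mxvec (phi Y).
Proof. by rewrite AmxE mul1mx phiid. Qed.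

Lemma Amx_on1 x : phi x = x -> mxvec 1%:M *m Amx x = mxvec x.
Proof. by move=> hx; rewrite AmxE phi1 mulmx1 hx. Qed.

Lemma Amx_inj x : phi x = x -> Amx x = 0 -> x = 0.
Proof.
move=> hx h; have := Amx_on1 hx; rewrite h mulmx0 => /esym.
by rewrite -(linear0 (@mxvec C n n)) => /(can_inj (@mxvecK _ _ _)).
Qed.

Lemma pow_in x m : phi x = x -> exists2 y, phi y = y &
  (Amx x) ^+ m.+1 = Amx y /\ (adjmx x = x -> adjmx y = y).
Proof.
move=> hx; elim: m => [|m [y hy [Ey Hy]]]; first by exists x.
exists (phi (x *m y)); first exact: phiid.
split; first by rewrite exprSr Ey -mulmxE AmxM.
by move=> hax; rewrite -herm adjmxM hax Hy // comm.
Qed.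

Lemma red_herm h : phi h = h -> adjmx h = h ->
  forall m, (Amx h) ^+ m = 0 -> Amx h = 0.
Proof.
move=> hh hah m; elim/ltn_ind: m => m IH hm.
case: m IH hm => [|[|m]] IH hm.
- by rewrite -[Amx h]mulr1 -(expr0 (Amx h)) hm mulr0.
- by rewrite -(expr1 (Amx h)).
set j := uphalf m.+2.
have j1 : (0 < j)%N by rewrite /j.
have jm : (j < m.+2)%N by rewrite /j uphalfE; lia.
have [g hg [Eg Hg]] := pow_in j.-1 hh.
have := Hg hah; rewrite prednK // in Eg => hag.
have : Amx g *m Amx g = 0.
  rewrite -Eg mulmxE -exprD (_ : (j + j = m.+2 + (j + j - m.+2))%N); last first.
    by rewrite /j uphalfE; lia.
  by rewrite exprD hm mul0r.
rewrite AmxM // => /(Amx_inj (phiid _)).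
rewrite -{1}hag => /(faithful hg) g0.
apply: (IH j jm); by rewrite Eg g0 Amx0.
Qed.

Lemma red x m : phi x = x -> (Amx x) ^+ m = 0 -> Amx x = 0.
Proof.
move=> hx hm.
have ha := adjE hx.
set h := phi (adjmx x *m x).
have hh : phi h = h by exact: phiid.
have hah : adjmx h = h by rewrite -herm adjmxM adjmxK.
have Eh : Amx h = Amx x *m Amx (adjmx x) by rewrite AmxM.
have : (Amx h) ^+ m = 0.
  rewrite Eh mulmxE exprMn_comm ?hm ?mul0r //.
  by rewrite /GRing.comm -!mulmxE AmxC.
move/(red_herm hh hah) => /(Amx_inj hh) /(faithful hx) ->.
exact: Amx0.
Qed.

End Phi.
Section Main.
Variable C : numClosedFieldType.
Variable n' : nat.
Local Notation n := n'.+1.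
Variable phi : {linear 'M[C]_n -> 'M[C]_n}.
Hypothesis phi1 : phi 1%:M = 1%:M.
Hypothesis phicp : completely_positive phi.
Hypothesis phicpt : completely_positive (fun X => (phi X)^T).
Hypothesis phiid : forall X, phi (phi X) = phi X.

Local Notation Amx := (Amx phi).
Local Notation phiD := (phiD phi).
Local Notation phiZ := (phiZ phi).
Local Notation phi0 := (phi0 phi).
Local Notation phi_sum := (phi_sum phi).
Local Notation herm := (herm phi1 phicp).
Local Notation adjE := (adjE phi1 phicp).
Local Notation faithful := (faithful phi1 phicp).
Local Notation bimod_l := (bimod_l phi1 phicp phiid).
Local Notation bimod_r := (bimod_r phi1 phicp phiid).
Local Notation comm := (comm phi1 phicp phicpt phiid).
Local Notation pos := (pos phi1 phicp).
Local Notation AmxE := (AmxE phi).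
Local Notation AmxM := (AmxM phi1 phicp phiid).
Local Notation AmxC := (AmxC phi1 phicp phicpt phiid).
Local Notation Amx_lin := (Amx_lin phi).
Local Notation Amx0 := (Amx0 phi).
Local Notation Amx1 := (Amx1 phiid).
Local Notation Amx_on1 := (Amx_on1 phi1).
Local Notation red := (red phi1 phicp phicpt phiid).

Lemma AmxD x y : Amx (x + y) = Amx x + Amx y.
Proof. by have := Amx_lin 1 x y; rewrite !scale1r. Qed.

Lemma AmxZ c x : Amx (c *: x) = c *: Amx x.
Proof. by have := Amx_lin c x 0; rewrite !addr0 Amx0 addr0. Qed.

Lemma Amx_sum (I : Type) (r : seq I) (c : I -> C) (y : I -> 'M[C]_n) :
  Amx (\sum_(i <- r) c i *: y i) = \sum_(i <- r) c i *: Amx (y i).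
Proof.
elim: r => [|a r IH]; first by rewrite !big_nil Amx0.
by rewrite !big_cons AmxD AmxZ IH.
Qed.

Lemma vec_mxZ (c : C) (v : 'rV[C]_(n * n)) : vec_mx (c *: v) = c *: vec_mx v.
Proof. by apply/matrixP=> i j; rewrite !mxE. Qed.

Definition bas (i : 'I_(n * n)) := phi (vec_mx (delta_mx 0 i)).

Lemma Amx_span x : phi x = x ->
  Amx x = \sum_(i < n * n) (mxvec x) 0 i *: Amx (bas i).
Proof.
move=> hx; rewrite -{1}hx -{1}(mxvecK x) {1}(row_sum_delta (mxvec x)).
rewrite linear_sum /= phi_sum.
rewrite (eq_bigr (fun i => mxvec x 0 i *: bas i)); first by rewrite Amx_sum.
by move=> i _; rewrite vec_mxZ phiZ.
Qed.

Lemma codiag : codiagonalizable [seq Amx (bas i) | i <- enum 'I_(n * n)].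
Proof.
apply/codiagonalizableP; split.
  by move=> f g /mapP [i _ ->] /mapP [j _ ->]; apply: AmxC; apply: phiid.
move=> f /mapP [i _ ->].
apply: (@diag_reduced _ _ _ (fun M => exists2 y, phi y = y & M = Amx y)).
- by exists (bas i) => //; apply: phiid.
- by exists 0; rewrite ?phi0 ?Amx0.
- by move=> M M' [y hy ->] [y' hy' ->]; exists (y + y'); rewrite ?phiD ?hy ?hy' ?AmxD.
- by move=> c M [y hy ->]; exists (c *: y); rewrite ?phiZ ?hy ?AmxZ.
- move=> M [y hy ->]; exists (phi (bas i *m y)); first exact: phiid.
  by rewrite AmxM //; apply: phiid.
- by move=> M k [y hy ->]; apply: red.
Qed.

Section WithP.
Variable P : 'M[C]_(n * n).
Hypothesis Punit : P \in unitmx.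
Hypothesis Pdiag : all [pred A | similar_diag P A] [seq Amx (bas i) | i <- enum 'I_(n * n)].

Local Notation Q := (invmx P).
Definition Pi (s : 'I_(n * n)) := Q *m delta_mx s s *m P.
Definition lam (s : 'I_(n * n)) (z : 'M[C]_n) := (mxvec z *m Q) 0 s.

Lemma row_delta (w : 'rV[C]_(n * n)) s : w *m delta_mx s s = w 0 s *: delta_mx 0 s.
Proof.
rewrite -(mul_delta_mx (0 : 'I_1)) mulmxA -colE (mx11_scalar (col s w)) mul_scalar_mx.
by rewrite !mxE.
Qed.

Lemma Pi_row u s : u *m Pi s = (u *m Q) 0 s *: row s P.
Proof. by rewrite /Pi !mulmxA row_delta -scalemxAl -rowE. Qed.

Lemma Pi_sum : \sum_s Pi s = 1%:M.
Proof.
rewrite /Pi -mulmx_suml -mulmx_sumr.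
have -> : \sum_(s < n * n) delta_mx s s = 1%:M :> 'M[C]_(n * n).
  apply/matrixP => i j; rewrite summxE (bigD1 i) //= big1 => [|k ki]; rewrite !mxE.
    by rewrite eqxx /= addr0 eq_sym.
  by rewrite eq_sym (negPf ki).
by rewrite mulmx1 mulVmx.
Qed.

Lemma Pi_idem s : Pi s *m Pi s = Pi s.
Proof.
rewrite /Pi !mulmxA -[Q *m _ *m P *m Q]mulmxA mulmxV // mulmx1.
by rewrite -[Q *m _ *m _]mulmxA mul_delta_mx.
Qed.

Lemma delta_diag_comm (D : 'M[C]_(n * n)) s :
  is_diag_mx D -> delta_mx s s *m D = D *m delta_mx s s.
Proof.
move/is_diag_mxP => hD.
have hr : row s D = D s s *: delta_mx 0 s.
  apply/rowP => j; rewrite !mxE eqxx /=.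
  by case: (eqVneq j s) => [->|js]; rewrite ?mulr1 // mulr0 hD // eq_sym.
have hc : col s D = D s s *: delta_mx s 0.
  apply/colP => j; rewrite !mxE eqxx andbT.
  by case: (eqVneq j s) => [->|js]; rewrite ?mulr1 // mulr0 hD.
have dd : delta_mx s s = delta_mx s (0 : 'I_1) *m delta_mx 0 s :> 'M[C]_(n * n).
  by rewrite mul_delta_mx.
have L : delta_mx s s *m D = D s s *: delta_mx s s.
  by rewrite {1}dd -mulmxA -rowE hr -scalemxAr mul_delta_mx.
have R : D *m delta_mx s s = D s s *: delta_mx s s.
  by rewrite {1}dd mulmxA -colE hc -scalemxAl mul_delta_mx.
by rewrite L R.
Qed.

Lemma Pi_comm_bas i s : Pi s *m Amx (bas i) = Amx (bas i) *m Pi s.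
Proof.
have hin : Amx (bas i) \in [seq Amx (bas j) | j <- enum 'I_(n * n)].
  by apply/mapP; exists i; rewrite ?mem_enum.
have /= := allP Pdiag _ hin.
rewrite /similar_to /conjmx pinvmxE // => hd.
set M := Amx (bas i) in hd *.
have e1 : Pi s *m M = Q *m (delta_mx s s *m (P *m M *m Q)) *m P.
  by rewrite /Pi !mulmxA -(mulmxA _ Q P) mulVmx // mulmx1.
have e2 : M *m Pi s = Q *m ((P *m M *m Q) *m delta_mx s s) *m P.
  by rewrite /Pi !mulmxA mulVmx // mul1mx.
by rewrite e1 e2 delta_diag_comm.
Qed.


Lemma Pi_comm x s : phi x = x -> Pi s *m Amx x = Amx x *m Pi s.
Proof.
move=> hx; rewrite (Amx_span hx) mulmx_sumr mulmx_suml; apply: eq_bigr => i _.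
by rewrite -scalemxAr -scalemxAl Pi_comm_bas.
Qed.

Definition e (s : 'I_(n * n)) : 'M[C]_n := vec_mx (mxvec 1%:M *m Pi s).

Lemma mxvec_inj : injective (@mxvec C n n).
Proof. exact: (can_inj (@mxvecK _ _ _)). Qed.

Lemma e_in s : phi (e s) = e s.
Proof.
apply: mxvec_inj; rewrite -Amx1 /e vec_mxK -mulmxA Pi_comm ?phi1 //.
by rewrite mulmxA Amx1 phi1.
Qed.

Lemma e_mul s z : phi z = z -> phi (e s *m z) = vec_mx (mxvec z *m Pi s).
Proof.
move=> hz; rewrite comm ?e_in // -{1}e_in.
rewrite -[phi (z *m phi (e s))](mxvecK) -AmxE /e vec_mxK.
by rewrite -mulmxA Pi_comm // mulmxA Amx_on1.
Qed.

Lemma e_sum : \sum_s e s = 1%:M.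
Proof.
rewrite /e -linear_sum /= -mulmx_sumr Pi_sum mulmx1; exact: mxvecK.
Qed.

Lemma e_idem s : phi (e s *m e s) = e s.
Proof.
by rewrite e_mul ?e_in // {1}/e vec_mxK -mulmxA Pi_idem.
Qed.

Definition chi s z := lam s z / lam s 1%:M.

Lemma e_char s z : phi z = z -> phi (e s *m z) = chi s z *: e s.
Proof.
move=> hz.
have ee : e s = lam s 1%:M *: vec_mx (row s P) by rewrite /e Pi_row vec_mxZ.
case: (eqVneq (lam s 1%:M) 0) => [h0|hn].
  by rewrite ee h0 !scale0r mul0mx phi0 scaler0.
rewrite e_mul // Pi_row vec_mxZ ee scalerA /chi divfK //.
Qed.


Lemma idem_herm f : phi f = f -> phi (f *m f) = f ->
  (forall z, phi z = z -> exists c, phi (f *m z) = c *: f) -> adjmx f = f.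
Proof.
move=> hf hff H.
case: (eqVneq f 0) => [->|nz]; first by rewrite adjmx0.
have fa := adjE hf.
have [c hc] := H (adjmx f) fa.
have hh : adjmx (phi (f *m adjmx f)) = phi (f *m adjmx f).
  by rewrite -herm adjmxM adjmxK.
have nz' : phi (f *m adjmx f) != 0.
  apply: contra nz => /eqP h0; apply/eqP.
  have := faithful fa; rewrite adjmxK => /(_ h0) /(congr1 adjmx).
  by rewrite adjmxK adjmx0.
rewrite hc in hh nz'; rewrite adjmxZ in hh.
have c0 : c != 0 by move: nz'; rewrite scaler_eq0 negb_or => /andP [].
have cc0 : c^* != 0 by rewrite conjC_eq0.
set u := c / c^*.
have hu : adjmx f = u *: f.
  by rewrite /u mulrC -scalerA -hh scalerA mulVf // scale1r.
have u0 : u != 0 by rewrite /u mulf_neq0 // invr_eq0.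
have : adjmx f = (u * u) *: f.
  by rewrite -{1}hff -herm adjmxM hu -scalemxAl -scalemxAr phiZ phiZ hff scalerA mulrC.
rewrite {1}hu => /eqP; rewrite -subr_eq0 -scalerBl scaler_eq0 (negbTE nz) orbF.
rewrite -{1}(mulr1 u) -mulrBr mulf_eq0 (negbTE u0) /= subr_eq0 => /eqP u1.
by rewrite hu -u1 scale1r.
Qed.

Lemma e_herm s : adjmx (e s) = e s.
Proof.
apply: idem_herm; [exact: e_in | exact: e_idem | move=> z hz].
by exists (chi s z); exact: e_char.
Qed.

Lemma e_psd s : psdmx (e s).
Proof. by rewrite -e_idem -{1}e_herm; apply: pos; exact: psd_gram. Qed.

Definition cc s X := if e s == 0 then 0 else chi s (phi X).

Lemma decomp X : phi X = \sum_s cc s X *: e s.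
Proof.
rewrite -{1}phiid -[phi X]mul1mx -e_sum mulmx_suml phi_sum.
apply: eq_bigr => s _; rewrite e_char ?phiid // /cc.
by case: (eqVneq (e s) 0) => [->|]; rewrite ?scaler0.
Qed.

Lemma lam_lin s a z z' : lam s (a *: z + z') = a * lam s z + lam s z'.
Proof. by rewrite /lam linearD linearZ /= mulmxDl -scalemxAl !mxE. Qed.

Lemma cc_lin s a X Y : cc s (a *: X + Y) = a * cc s X + cc s Y.
Proof.
rewrite /cc; case: (e s == 0); first by rewrite mulr0 addr0.
by rewrite /chi phiD phiZ lam_lin mulrDl mulrA.
Qed.

Lemma cc_pos s X : psdmx X -> 0 <= cc s X.
Proof.
move=> hX; rewrite /cc; case: (eqVneq (e s) 0) => [//|nz].
apply: (psd_scale_ge0 (e_psd s) nz).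
have -> : chi s (phi X) *: e s = phi (e s *m X *m e s).
  rewrite -mulmxA (bimod_l (X *m e s) (e_in s)) (bimod_r X (e_in s)).
  rewrite (comm (phiid X) (e_in s)) (e_char s (phiid X)).
  by rewrite -scalemxAr phiZ e_idem.
by apply: pos; rewrite -{1}e_herm; exact: psd_congr.
Qed.

Lemma EB_withP : entanglement_breaking phi.
Proof.
exists (flatten [seq [seq (v, w) | v <- rk1 (e s), w <- rk1 (funmx (cc s))]
                | s <- enum 'I_(n * n)]).
move=> X; rewrite big_flatten big_map big_enum /= decomp.
apply: eq_bigr => s _; rewrite big_allpairs /=.
rewrite {1}(func_rep (cc_lin s) (cc_pos s) X) {1}(rk1E (e_psd s)).
rewrite scaler_sumr; apply: eq_bigr => v _; rewrite scaler_suml.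
apply: eq_bigr => w _.
have -> : v *m adjmx w *m X *m w *m adjmx v = v *m (adjmx w *m X *m w) *m adjmx v.
  by rewrite !mulmxA.
set K := adjmx w *m X *m w.
have -> : K = (K 0 0)%:M by exact: mx11_scalar.
by rewrite mul_mx_scalar -scalemxAl mxE eqxx mulr1n.
Qed.

End WithP.

Lemma EB_main : entanglement_breaking phi.
Proof. have [P Pu Pd] := codiag. exact: (EB_withP Pu Pd). Qed.

End Main.

Theorem mainTheorem5 (R : realType) (n : nat) (phi : {linear 'M[R[i]]_n -> 'M[R[i]]_n}) :
  phi 1%:M = 1%:M ->
  PPT phi ->
  (forall X, phi (phi X) = phi X) ->
  entanglement_breaking phi.
Proof.
case: n phi => [|n'] phi h1 [hcp hcpt] hid.
  by exists [::] => X; rewrite big_nil; apply/matrixP => i; case: i.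
exact: EB_main h1 hcp hcpt hid.
Qed.
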